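(* For any signature $\Sigma$, the quadruple consisting of the class of $\Sigma$-forest-like alphabets, the disjoint sum operation $\mathbin{+\!\!+}$, the maps $r_A$, and the alphabet $A_p(\Sigma)$ is a polynomial realization of the Hopf algebra $\mathbf N(T(\Sigma))$. That is: (i) $\mathbin{+\!\!+}$ is associative; (ii) for every $\Sigma$-forest-like alphabet $A$, $r_A:\mathbf N(T(\Sigma))\to\mathbb K\langle A\rangle$ is a graded unital associative algebra morphism; (iii) for all $\Sigma$-forest-like alphabets $A_1,A_2$ and every $x\in\mathbf N(T(\Sigma))$, $\theta_{A_1,A_2}(r_{A_1\mathbin{+\!\!+}A_2}(x))=(r_{A_1}\otimes r_{A_2})(\Delta x)$; (iv) $r_{A_p(\Sigma)}$ is injective.
   Context: $\mathbb K$ is a field of characteristic zero; $[P]$ is $1$ if $P$ holds, $0$ otherwise. A signature is a set $\Sigma$ with arity map $|\cdot|:\Sigma\to\mathbb N$. A $\Sigma$-term is the leaf $\bot$ or $s(t_1,\dots,t_n)$ with $s$ of arity $n$, $t_i$ terms; degree = number of internal nodes, arity $|t|$ = number of leaves. $T(\Sigma)$ is the free operad: $t[t_1,\dots,t_{|t|}]$ grafts $t_i$ on the $i$-th leaf of $t$. A $\Sigma$-forest is a finite word of terms; reduced if no term is $\bot$; $\mathrm{rd}$ deletes terms equal to $\bot$. Internal nodes of a forest $f$ are identified with $1,\dots,\deg f$ by preorder; $d_f(i)$ decoration of $i$; $i\to^f_j i'$ means $i'$ is the $j$-th child of $i$; roots are the roots of terms. $\mathbf N(T(\Sigma))$: basis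 $E_f$ ($f$ reduced), product $E_{f_1}E_{f_2}=E_{f_1f_2}$, grading $\deg f$, coproduct the algebra morphism with $\Delta E_t=\sum E_{\mathrm{rd}(t')}\otimes E_{\mathrm{rd}(t_1\cdots t_{|t'|})}$ over all $t',t_1,\dots$ with $t=t'[t_1,\dots,t_{|t'|}]$. A $\Sigma$-forest-like alphabet is a set $A$ with arbitrary: subset $R^A$, subsets $D^A_s$ ($s\in\Sigma$), binary relations $\to^A_j$ ($j\ge1$). $\mathbb K\langle A\rangle$: noncommutative polynomials over $A$ with possibly infinite support and bounded degree. A word $w\in A^*$ is $A$-compatible with $f$ if it has length $\deg f$, $w(i)\in R^A$ for each root $i$, $w(i)\in D^A_{d_f(i)}$ for each $i$, and $i\to^f_j i'$ implies $w(i)\to^A_j w(i')$. $r_A(E_f)=\sum_{w\in A^*}[w\ A\text{-compatible with }f]\,w$. The disjoint sum $A_1\mathbin{+\!\!+}A_2$ is $A_1\sqcup A_2$ with $R=R^{A_1}\sqcup R^{A_2}$, $D_s=D^{A_1}_s\sqcup D^{A_2}_s$, and $a\to_j a'$ iff ($a,a'\in A_1$, $a\to^{A_1}_j a'$) or ($a,a'\in A_2$, $a\to^{A_2}_j a'$) or ($a\in A_1$, $a'\in A_2$, $a'\in R^{A_2}$). $\theta_{A_1,A_2}$ is the linear map $w\mapsto w_{|A_1}\otimes w_{|A_2}$. The alphabet of positions $A_p(\Sigma)=\{a^s_u:s\in\Sigma,u\in\mathbb N^*\}$ has root relation $\{a^s_{0^\ell}\}$, $D_s=\{a^s_u:u\in\mathbb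 N^*\}$, and $a^s_u\to_j a^{s'}_v$ iff $v=u\,j\,0^\ell$ for some $\ell\in\mathbb N$. *)

(* Defs.v *)
From Stdlib Require Import ClassicalEpsilon.
From mathcomp Require Import all_boot all_order all_algebra.
Set Implicit Arguments.
Unset Strict Implicit.
Unset Printing Implicit Defensive.
Import GRing.Theory.
Local Open Scope ring_scope.

Section Terms.
Variable S : Type.

(* Raw terms: the leaf (bottom) or s(t_1,...,t_n); well-formedness w.r.t.   *)
(* the arity map is the predicate [wf_term] below.                           *)
Inductive term : Type := Leaf | Node of S & seq term.

Variable ar : S -> nat.

Fixpoint wf_term (t : term) : bool :=
  match t with
  | Leaf => true
  | Node s ts => (size ts == ar s) && all wf_term ts
  end.

Fixpoint tdeg (t : term) : nat :=
  match t with Leaf => 0%N | Node _ ts => (sumn (map tdeg ts)).+1 end.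

Fixpoint tleaves (t : term) : nat :=
  match t with Leaf => 1%N | Node _ ts => sumn (map tleaves ts) end.

(* Grafting t[t_1,...,t_|t|]: the i-th leaf (left to right) is replaced by t_i. *)
Fixpoint graft_aux (t : term) (ts : seq term) : term * seq term :=
  match t with
  | Leaf => if ts is u :: us then (u, us) else (Leaf, [::])
  | Node s cs =>
    let fix go (cs : seq term) (ts : seq term) : seq term * seq term :=
      match cs with
      | [::] => ([::], ts)
      | c :: cs0 => let p := graft_aux c ts in
                    let q := go cs0 p.2 in (p.1 :: q.1, q.2)
      end in
    let q := go cs ts in (Node s q.1, q.2)
  end.
Definition graft (t : term) (ts : seq term) : term := (graft_aux t ts).1.

Definition forest := seq term.
Definition fdeg (f : forest) : nat := sumn (map tdeg f).
Definition isNode (t : term) : bool := if t is Node _ _ then true else false.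
Definition reduced (f : forest) : bool := all isNode f.
Definition rd (f : forest) : forest := filter isNode f.

(* All decompositions t = t'[t_1,...,t_|t'|] (t' and the t_i Sigma-terms),   *)
(* listed as pairs (t', [:: t_1; ...; t_|t'|]). For t = s(u_1..u_n) either   *)
(* t' = leaf (and the list is [:: t]) or t' = s(t'_1..t'_n) with each        *)
(* u_k = t'_k[...]; for t = leaf the only one is (leaf, [:: leaf]).          *)
Fixpoint prodseq (X : Type) (l : seq (seq X)) : seq (seq X) :=
  match l with
  | [::] => [:: [::]]
  | a :: r => flatten [seq [seq x :: y | y <- prodseq r] | x <- a]
  end.

Fixpoint decomps (t : term) : seq (term * seq term) :=
  match t with
  | Leaf => [:: (Leaf, [:: Leaf])]
  | Node s us =>
    (Leaf, [:: Node s us]) ::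
    [seq (Node s (map fst l), flatten (map snd l)) | l <- prodseq (map decomps us)]
  end.

(* Preorder numbering of internal nodes (0-based: node i <-> letter i of w,  *)
(* i.e. the paper's node i+1).  For each node: its decoration and the list  *)
(* of pairs (j, i') meaning "i' is the j-th child of i" (j >= 1), for the   *)
(* children which are internal nodes.                                       *)
Fixpoint tnodes (t : term) (off : nat) : seq (S * seq (nat * nat)) :=
  match t with
  | Leaf => [::]
  | Node s ts =>
    let fix go (ts : seq term) (j o : nat)
        : seq (nat * nat) * seq (S * seq (nat * nat)) :=
      match ts with
      | [::] => ([::], [::])
      | u :: us => let l := tnodes u o in
                   let q := go us j.+1 (o + size l) in
                   ((if u is Node _ _ then (j, o) :: q.1 else q.1), l ++ q.2)
      end in
    let q := go ts 1%N off.+1 in (s, q.1) :: q.2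
  end.

(* For a forest: (indices of roots, node data), in preorder. *)
Fixpoint fnodes (f : forest) (off : nat) : seq nat * seq (S * seq (nat * nat)) :=
  match f with
  | [::] => ([::], [::])
  | t :: f' => let l := tnodes t off in
               let q := fnodes f' (off + size l) in
               ((if t is Node _ _ then off :: q.1 else q.1), l ++ q.2)
  end.

Record alphabet := Alphabet {
  letter :> Type;
  aR : letter -> Prop;
  aD : S -> letter -> Prop;
  aE : nat -> letter -> letter -> Prop
}.

Definition compatible (A : alphabet) (w : seq A) (f : forest) : Prop :=
  let rs := (fnodes f 0).1 in
  let ns := (fnodes f 0).2 in
  [/\ size w = fdeg f,
      (forall i a, i \in rs -> onth w i = Some a -> aR a),
      (forall i s es a, onth ns i = Some (s, es) -> onth w i = Some a -> aD s a)
    & (forall i s es j i' a a', onth ns i = Some (s, es) -> (j, i') \in es ->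
         onth w i = Some a -> onth w i' = Some a' -> aE j a a')].

Definition dsum (A1 A2 : alphabet) : alphabet :=
  @Alphabet (A1 + A2)%type
    (fun a => match a with inl x => aR x | inr y => aR y end)
    (fun s a => match a with inl x => aD s x | inr y => aD s y end)
    (fun j a b => match a, b with
                  | inl x, inl y => aE j x y
                  | inr x, inr y => aE j x y
                  | inl _, inr y => aR y
                  | inr _, inl _ => False
                  end).

Definition alph_iso (A B : alphabet) (phi : A -> B) : Prop :=
  [/\ bijective phi,
      (forall a, aR (phi a) <-> aR a),
      (forall s a, aD s (phi a) <-> aD s a)
    & (forall j a b, aE j (phi a) (phi b) <-> aE j a b)].

(* The alphabet of positions A_p(Sigma): a^s_u is the pair (s, u). *)
Definition Apos : alphabet :=
  @Alphabet (S * seq nat)%type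
    (fun a => exists l, a.2 = nseq l 0%N)
    (fun s a => a.1 = s)
    (fun j a b => exists l, b.2 = a.2 ++ j :: nseq l 0%N).

End Terms.

Arguments Leaf {S}.

Definition sum_assocr (A B C : Type) (x : (A + B) + C) : A + (B + C) :=
  match x with
  | inl (inl a) => inl a
  | inl (inr b) => inr (inl b)
  | inr c => inr (inr c)
  end.

(* Shuffles of u and v: exactly the words w over A1 + A2 with w_|A1 = u and  *)
(* w_|A2 = v (each listed once).                                             *)
Fixpoint shuffle (A1 A2 : Type) (u : seq A1) (v : seq A2) : seq (seq (A1 + A2)) :=
  match u with
  | [::] => [:: map inr v]
  | a :: u' =>
    let fix sh2 (v : seq A2) :=
      match v with
      | [::] => [:: map inl u]
      | b :: v' => map (cons (inl a)) (shuffle u' v) ++ map (cons (inr b)) (sh2 v')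
      end in sh2 v
  end.

Definition restrl (A1 A2 : Type) (w : seq (A1 + A2)) : seq A1 :=
  pmap (fun x => if x is inl a then Some a else None) w.
Definition restrr (A1 A2 : Type) (w : seq (A1 + A2)) : seq A2 :=
  pmap (fun x => if x is inr a then Some a else None) w.

Section Lin.
Local Unset Implicit Arguments.
Variable K : fieldType.

Definition ind (P : Prop) : K :=
  if excluded_middle_informative P then 1 else 0.

(* K<A>: coefficient functions on words (possibly infinite support); an     *)
(* element must have bounded degree.                                        *)
Definition bounded (A : Type) (p : seq A -> K) : Prop :=
  exists d, forall w, (d < size w)%N -> p w = 0.
Definition oneP (A : Type) : seq A -> K := fun w => if w is [::] then 1 else 0.
Definition mulP (A : Type) (p q : seq A -> K) : seq A -> K :=
  fun w => \sum_(i < (size w).+1) p (take i w) * q (drop i w).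

(* theta_{A1,A2} : w |-> w_|A1 (x) w_|A2, extended linearly; the result is  *)
(* given by its coefficient on each pair of words (w1, w2).                 *)
Definition theta (A1 A2 : Type) (p : seq (A1 + A2) -> K) : seq A1 -> seq A2 -> K :=
  fun w1 w2 => \sum_(w <- shuffle w1 w2) p w.

Variable S : Type.

(* Elements of N(T(Sigma)) are finite formal linear combinations of the     *)
(* basis E_f (f a reduced Sigma-forest): lists of (coefficient, forest).     *)
(* Two such lists represent the same element iff [Ncoef] agrees.             *)
Definition Nvec := seq (K * forest S).
Definition validN (ar : S -> nat) (x : Nvec) : bool :=
  all (fun p => reduced p.2 && all (wf_term ar) p.2) x.
Definition Ncoef (x : Nvec) (f : forest S) : K := \sum_(p <- x) p.1 * ind (p.2 = f).
Definition oneN : Nvec := [:: (1, [::])].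
Definition addN (x y : Nvec) : Nvec := x ++ y.
Definition scaleN (c : K) (x : Nvec) : Nvec := [seq (c * p.1, p.2) | p <- x].
Definition mulN (x y : Nvec) : Nvec := [seq (p.1 * q.1, p.2 ++ q.2) | p <- x, q <- y].

(* N (x) N : formal combinations of E_g (x) E_h *)
Definition NNvec := seq (K * forest S * forest S).
Definition mulNN (x y : NNvec) : NNvec :=
  [seq (p.1.1 * q.1.1, p.1.2 ++ q.1.2, p.2 ++ q.2) | p <- x, q <- y].
Definition DeltaT (t : term S) : NNvec :=
  [seq (1, rd [:: tp.1], rd tp.2) | tp <- decomps t].
(* Delta is the algebra morphism: Delta E_{t1...tk} = Delta E_t1 ... Delta E_tk *)
Definition DeltaE (f : forest S) : NNvec :=
  foldr (fun t acc => mulNN (DeltaT t) acc) [:: (1, [::], [::])] f.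
Definition Delta (x : Nvec) : NNvec :=
  flatten [seq [seq (p.1 * q.1.1, q.1.2, q.2) | q <- DeltaE p.2] | p <- x].

Definition rE (A : alphabet S) (f : forest S) : seq A -> K :=
  fun w => ind (compatible w f).
Definition rA (A : alphabet S) (x : Nvec) : seq A -> K :=
  fun w => \sum_(p <- x) p.1 * rE A p.2 w.
(* (r_A1 (x) r_A2) on N (x) N, as coefficients on pairs of words *)
Definition rtens (A1 A2 : alphabet S) (z : NNvec) : seq A1 -> seq A2 -> K :=
  fun w1 w2 => \sum_(p <- z) p.1.1 * (rE A1 p.1.2 w1 * rE A2 p.2 w2).

End Lin.

Arguments ind {K} P.
Arguments bounded {K A} p.
Arguments oneP {K A} w.
Arguments mulP {K A} p q w.
Arguments theta {K A1 A2} p w1 w2.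
Arguments validN {K S} ar x.
Arguments Ncoef {K S} x f.
Arguments oneN {K S}.
Arguments addN {K S} x y.
Arguments scaleN {K S} c x.
Arguments mulN {K S} x y.
Arguments mulNN {K S} x y.
Arguments DeltaT {K S} t.
Arguments DeltaE {K S} f.
Arguments Delta {K S} x.
Arguments rE {K S} A f w.
Arguments rA {K S} A x w.
Arguments rtens {K S} A1 A2 z w1 w2.

(* Main.v *)
Require Import Defs.
From Stdlib Require Import ClassicalEpsilon.
From mathcomp Require Import all_boot all_order all_algebra.
Import GRing.Theory.
Set Implicit Arguments.
Unset Strict Implicit.
Unset Printing Implicit Defensive.
Local Open Scope ring_scope.

Section Basics.
Variable S : Type.

Fixpoint AllP (P : term S -> Prop) (ts : seq (term S)) : Prop :=
  match ts with [::] => True | u :: us => P u /\ AllP P us end.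

Lemma term_ind' (P : term S -> Prop) : P Leaf ->
  (forall s ts, AllP P ts -> P (Node s ts)) -> forall t, P t.
Proof.
move=> HL HN; fix IH 1; case=> [|s ts]; first exact HL.
apply: HN.
exact ((fix go ts : AllP P ts := match ts with [::] => I | u :: us => conj (IH u) (go us) end) ts).
Qed.

Variable A : alphabet S.

Fixpoint CTSg (ct : (A -> Prop) -> term S -> seq A -> Prop) (a : A) (j : nat)
   (ts : seq (term S)) (w : seq A) : Prop :=
  match ts with
  | [::] => w = [::]
  | u :: us => exists w1 w2, w = w1 ++ w2 /\ ct (aE j a) u w1 /\ CTSg ct a j.+1 us w2
  end.

Fixpoint CT (P : A -> Prop) (t : term S) (w : seq A) {struct t} : Prop :=
  match t with
  | Leaf => w = [::]
  | Node s ts => exists a w', w = a :: w' /\ P a /\ aD s a /\ CTSg CT a 1 ts w'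
  end.

Fixpoint CF (P : A -> Prop) (f : forest S) (w : seq A) : Prop :=
  match f with
  | [::] => w = [::]
  | t :: f' => exists w1 w2, w = w1 ++ w2 /\ CT P t w1 /\ CF P f' w2
  end.


Lemma CT_leaf P w : CT P Leaf w <-> w = [::]. Proof. by []. Qed.
Lemma CT_node P s ts w : CT P (Node s ts) w <->
  exists a w', w = a :: w' /\ P a /\ aD s a /\ CTSg (@CT) a 1 ts w'.
Proof. by []. Qed.

Lemma CT_size_all : forall t, (forall P w, CT P t w -> size w = tdeg t).
Proof.
elim/term_ind' => [|s ts IH] P w /=; first by move->.
case=> a [w' [-> [_ [_ H]]]] /=; congr (_.+1).
elim: ts IH (1%N) w' H => [|u us IHs] /=; first by move=> _ j w' ->.
case=> IHu IHus j w'; case=> w1 [w2 [-> [H1 H2]]]; rewrite size_cat (IHu _ _ H1) (IHs IHus _ _ H2) //.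
Qed.

Lemma CT_size P t w : CT P t w -> size w = tdeg t.
Proof. exact: CT_size_all. Qed.

Lemma CF_size P f w : CF P f w -> size w = fdeg f.
Proof.
elim: f w => [|t f IH] w /=; first by move->.
case=> w1 [w2 [-> [H1 H2]]]; rewrite size_cat (CT_size H1) (IH _ H2) //.
Qed.

Lemma CT_ext P P' t w : (forall a, P a <-> P' a) -> (CT P t w <-> CT P' t w).
Proof.
move=> HP; case: t => [|s ts] //=; split; case=> a [w' [-> [Ha H]]];
  exists a, w'; split=> //; split=> //; exact/HP.
Qed.

Lemma CF_cat P f1 f2 w : CF P (f1 ++ f2) w <->
  exists w1 w2, w = w1 ++ w2 /\ CF P f1 w1 /\ CF P f2 w2.
Proof.
elim: f1 w => [|t f1 IH] w /=.
  split; first by move=> H; exists [::], w.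
  by case=> w1 [w2 [-> [-> H]]].
split.
  case=> w1 [w2 [-> [H1 /IH [w3 [w4 [-> [H3 H4]]]]]]].
  exists (w1 ++ w3), w4; rewrite catA; split=> //; split=> //.
  by exists w1, w3.
case=> w1 [w2 [-> [[w3 [w4 [-> [H3 H4]]]] H2]]].
exists w3, (w4 ++ w2); rewrite catA; split=> //; split=> //.
by apply/IH; exists w4, w2.
Qed.

Lemma CF_single P t w : CF P [:: t] w <-> CT P t w.
Proof.
split=> /=; first by case=> w1 [w2 [-> [H ->]]]; rewrite cats0.
by move=> H; exists w, [::]; rewrite cats0.
Qed.

Lemma CF_rd P f w : CF P (rd f) w <-> CF P f w.
Proof.
elim: f w => [|t f IH] w //=; case: t => [|s ts] /=.
  rewrite IH; split; first by move=> H; exists [::], w.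
  by case=> w1 [w2 [-> [-> H]]].
split; case=> w1 [w2 [-> [H1 H2]]]; exists w1, w2; split=> //; split=> //; exact/IH.
Qed.

Definition NOK (W : seq A) (off : nat) (l : seq (S * seq (nat * nat))) : Prop :=
  forall k s es a, onth l k = Some (s, es) -> onth W (off + k) = Some a ->
    aD s a /\ (forall j i' a', (j, i') \in es -> onth W i' = Some a' -> aE j a a').

Lemma NOK_nil W off : NOK W off [::].
Proof. by move=> [|k]. Qed.

Lemma NOK_cat W off l1 l2 :
  NOK W off (l1 ++ l2) <-> NOK W off l1 /\ NOK W (off + size l1) l2.
Proof.
split.
  move=> H; split.
    move=> k s es a Hk; apply: H; rewrite onth_cat.
    have -> : (k < size l1)%N by rewrite -onthTE Hk.
    done.
  move=> k s es a Hk; rewrite -addnA => Hw; apply: (H _ _ _ _ _ Hw).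
  by rewrite onth_cat ltnNge leq_addr /= addKn.
case=> H1 H2 k s es a; rewrite onth_cat; case: ltnP => Hk.
  exact: H1.
move=> Hk2 Hw; apply: (H2 _ _ _ _ Hk2); rewrite -addnA subnKC //.
Qed.

Lemma NOK_cons W off s es l : NOK W off ((s, es) :: l) <->
  (forall a, onth W off = Some a ->
     aD s a /\ (forall j i' a', (j, i') \in es -> onth W i' = Some a' -> aE j a a'))
  /\ NOK W off.+1 l.
Proof.
split.
  move=> H; split.
    by move=> a Ha; apply: (H 0%N); rewrite ?addn0.
  by move=> k s' es' a Hk; rewrite addSnnS; exact: (H k.+1).
case=> H1 H2 [|k] s' es' a /=.
  by case=> <- <-; rewrite addn0; apply: H1.
by move=> Hk; rewrite addnS -addSn; apply: H2.
Qed.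

Fixpoint go (ts : seq (term S)) (j o : nat) : seq (nat * nat) * seq (S * seq (nat * nat)) :=
  match ts with
  | [::] => ([::], [::])
  | u :: us => let l := tnodes u o in let q := go us j.+1 (o + size l) in
               ((if u is Node _ _ then (j, o) :: q.1 else q.1), l ++ q.2)
  end.

Lemma tnodesE s ts off :
  tnodes (Node s ts) off = (s, (go ts 1 off.+1).1) :: (go ts 1 off.+1).2.
Proof. reflexivity. Qed.

Lemma size_tnodes_all : forall (t : term S) o, size (tnodes t o) = tdeg t.
Proof.
elim/term_ind' => [|s ts IH] o //; rewrite tnodesE /=; congr (_.+1).
elim: ts IH (1%N) (o.+1) => [|u us IHs] //= [IHu IHus] j o'.
by rewrite size_cat IHu IHs.
Qed.

Lemma size_tnodes (t : term S) o : size (tnodes t o) = tdeg t.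
Proof. exact: size_tnodes_all. Qed.

Lemma onth_mid (T : Type) (W0 W2 : seq T) a : onth (W0 ++ a :: W2) (size W0) = Some a.
Proof. by rewrite onth_cat ltnn subnn. Qed.


Lemma bridge_T : forall (t : term S) (W0 w W1 : seq A) (P : A -> Prop),
  CT P t w <-> [/\ size w = tdeg t,
     (isNode t -> forall a, onth (W0 ++ w ++ W1) (size W0) = Some a -> P a)
   & NOK (W0 ++ w ++ W1) (size W0) (tnodes t (size W0))].
Proof.
elim/term_ind' => [|s ts IH] W0 w W1 P.
  rewrite /=; split; first by move->; split=> //; exact: NOK_nil.
  by case=> /size0nil.
have BG : forall (W0 w W1 : seq A) (a : A) j, CTSg (@CT) a j ts w <->
   [/\ size w = sumn (map (@tdeg S) ts),
       (forall j' i' a', (j', i') \in (go ts j (size W0)).1 ->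
          onth (W0 ++ w ++ W1) i' = Some a' -> aE j' a a')
     & NOK (W0 ++ w ++ W1) (size W0) (go ts j (size W0)).2].
  elim: ts IH => [|u us IHs] /=.
    move=> _ W0' w' W1' a j; split; first by move->; split=> //; exact: NOK_nil.
    by case=> /size0nil.
  case=> IHu IHus W0' w' W1' a j; split.
    case=> w1 [w2 [-> [H1 H2]]].
    have [Hs1 Hr1 Hn1] := (IHu W0' w1 (w2 ++ W1') _).1 H1.
    have [Hs2 He2 Hn2] := (IHs IHus (W0' ++ w1) w2 W1' a j.+1).1 H2.
    rewrite -catA size_cat Hs1 in He2 Hn2.
    rewrite -catA; split; first by rewrite size_cat Hs1 Hs2.
      move=> j' i' a'; rewrite size_tnodes.
      move: He2; set q := (go us j.+1 _).1 => He2.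
      case: (u) Hr1 => [|s' ts'] Hr1 /=; first exact: He2.
      rewrite in_cons; case/orP; last exact: He2.
      by case/eqP=> -> ->; apply: Hr1.
    by apply/NOK_cat; rewrite size_tnodes; split.
  case=> Hs He Hn.
  move: Hn; rewrite NOK_cat size_tnodes; case=> Hn1 Hn2.
  exists (take (tdeg u) w'), (drop (tdeg u) w'); split; first by rewrite cat_take_drop.
  have Hsz : (tdeg u <= size w')%N by rewrite Hs leq_addr.
  have Eq : W0' ++ w' ++ W1' = W0' ++ take (tdeg u) w' ++ (drop (tdeg u) w' ++ W1').
    by rewrite [take _ _ ++ _]catA cat_take_drop.
  split.
    apply/(IHu W0' _ (drop (tdeg u) w' ++ W1')); rewrite -Eq; split.
    - by rewrite size_take_min; apply/minn_idPl.
    - move=> Hu a' Ha'; apply: (He j); last exact: Ha'.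
      by move: Hu; set q := (go us _ _).1; case: (u) => //= _ _ _; rewrite mem_head.
    - exact: Hn1.
  have Eq2 : W0' ++ w' ++ W1' = (W0' ++ take (tdeg u) w') ++ drop (tdeg u) w' ++ W1'.
    by rewrite -catA Eq.
  have Hsz2 : size (W0' ++ take (tdeg u) w') = (size W0' + tdeg u)%N.
    by rewrite size_cat size_take_min; congr addn; apply/minn_idPl.
  apply/(IHs IHus (W0' ++ take (tdeg u) w') _ W1'); rewrite -Eq2 Hsz2; split.
  - by rewrite size_drop Hs addKn.
  - move=> j' i' a' Hin; apply: He; rewrite size_tnodes.
    by move: Hin; set q := (go us _ _).1 => Hin; case: (u) => [|? ?] //=; rewrite in_cons Hin orbT.
  - exact: Hn2.
rewrite tnodesE; split.
  case=> a [w' [-> [Ha [HD Hts]]]].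
  have Eq : W0 ++ (a :: w') ++ W1 = (W0 ++ [:: a]) ++ w' ++ W1 by rewrite -catA.
  have Hsz : size (W0 ++ [:: a]) = (size W0).+1 by rewrite size_cat addn1.
  have [Hs He Hn] := (BG (W0 ++ [:: a]) w' W1 a 1%N).1 Hts.
  rewrite -Eq Hsz in He Hn.
  split; first by rewrite /= Hs.
    by move=> _ a'; rewrite onth_mid; case=> <-.
  apply/NOK_cons; split=> //.
  by move=> a'; rewrite onth_mid; case=> <-; split.
case=> Hs Hr /NOK_cons [Hh Hn].
case: w Hs Hr Hh Hn => [|a w'] //= [Hs] Hr Hh Hn.
have := Hh a (onth_mid _ _ _); case=> HD He.
exists a, w'; split=> //; split; first exact: (Hr isT a (onth_mid _ _ _)).
split=> //.
have Eq : W0 ++ (a :: w') ++ W1 = (W0 ++ [:: a]) ++ w' ++ W1 by rewrite -catA.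
have Hsz : size (W0 ++ [:: a]) = (size W0).+1 by rewrite size_cat addn1.
apply/(BG (W0 ++ [:: a]) w' W1 a 1%N); rewrite -Eq Hsz; split=> //.
Qed.


Lemma bridge_F : forall (f : forest S) (W0 w W1 : seq A) (P : A -> Prop),
  CF P f w <-> [/\ size w = fdeg f,
    (forall i a, i \in (fnodes f (size W0)).1 -> onth (W0 ++ w ++ W1) i = Some a -> P a)
  & NOK (W0 ++ w ++ W1) (size W0) (fnodes f (size W0)).2].
Proof.
elim=> [|t f IH] W0 w W1 P /=.
  split; first by move->; split=> //; exact: NOK_nil.
  by case=> /size0nil.
rewrite /fdeg /=; split.
  case=> w1 [w2 [-> [H1 H2]]].
  have [Hs1 Hr1 Hn1] := (bridge_T t W0 w1 (w2 ++ W1) P).1 H1.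
  have [Hs2 Hr2 Hn2] := (IH (W0 ++ w1) w2 W1 P).1 H2.
  rewrite -catA size_cat Hs1 in Hr2 Hn2.
  rewrite -catA size_tnodes; split; first by rewrite size_cat Hs1 Hs2.
    move=> i a; move: Hr2; set q := (fnodes f _).1 => Hr2.
    case: (t) Hr1 => [|s' ts'] Hr1 /=; first exact: Hr2.
    rewrite in_cons; case/orP; last exact: Hr2.
    by move/eqP=> ->; apply: Hr1.
  by apply/NOK_cat; rewrite size_tnodes; split.
case=> Hs; rewrite !size_tnodes => Hr; rewrite NOK_cat size_tnodes; case=> Hn1 Hn2.
exists (take (tdeg t) w), (drop (tdeg t) w); split; first by rewrite cat_take_drop.
have Hsz : (tdeg t <= size w)%N by rewrite Hs leq_addr.
have Eq : W0 ++ w ++ W1 = W0 ++ take (tdeg t) w ++ (drop (tdeg t) w ++ W1).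
  by rewrite [take _ _ ++ _]catA cat_take_drop.
split.
  apply/(bridge_T t W0 _ (drop (tdeg t) w ++ W1)); rewrite -Eq; split.
  - by rewrite size_take_min; apply/minn_idPl.
  - move=> Ht a' Ha'; apply: (Hr (size W0)); last exact: Ha'.
    by move: Ht; set q := (fnodes f _).1; case: (t) => //= _ _ _; rewrite mem_head.
  - exact: Hn1.
have Eq2 : W0 ++ w ++ W1 = (W0 ++ take (tdeg t) w) ++ drop (tdeg t) w ++ W1.
  by rewrite -catA Eq.
have Hsz2 : size (W0 ++ take (tdeg t) w) = (size W0 + tdeg t)%N.
  by rewrite size_cat size_take_min; congr addn; apply/minn_idPl.
apply/(IH (W0 ++ take (tdeg t) w) _ W1); rewrite -Eq2 Hsz2; split.
- by rewrite size_drop Hs addKn.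
- move=> i a' Hin; apply: Hr.
  by move: Hin; set q := (fnodes f _).1 => Hin; case: (t) => [|? ?] //=; rewrite in_cons Hin orbT.
- exact: Hn2.
Qed.

Lemma compat_CF (w : seq A) (f : forest S) : compatible w f <-> CF (@aR S A) f w.
Proof.
rewrite (bridge_F f [::] w [::]) /= cats0 /compatible.
split.
  case=> Hs Hr HD HE; split=> // k s es a Hk; rewrite add0n => Hw; split.
    exact: HD Hk Hw.
  by move=> j i' a' Hin; apply: HE Hk Hin Hw.
case=> Hs Hr HN; split=> //.
  by move=> i s es a Hi Hw; case: (HN i s es a Hi Hw).
move=> i s es j i' a a' Hi Hin Hw Hw'.
by case: (HN i s es a Hi Hw) => _ H; apply: H Hin Hw'.
Qed.

End Basics.

Section Alg.
Variable K : fieldType.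
Local Open Scope ring_scope.

Lemma ind_iff (P Q : Prop) : (P <-> Q) -> ind P = ind Q :> K.
Proof.
rewrite /ind => H; case: excluded_middle_informative => HP;
  case: excluded_middle_informative => HQ //; exfalso; tauto.
Qed.

Lemma indT (P : Prop) : P -> ind P = 1 :> K.
Proof. by rewrite /ind; case: excluded_middle_informative. Qed.

Lemma indF (P : Prop) : ~ P -> ind P = 0 :> K.
Proof. by rewrite /ind; case: excluded_middle_informative. Qed.

Lemma ind_and (P Q : Prop) : ind (P /\ Q) = ind P * ind Q :> K.
Proof.
rewrite /ind; case: excluded_middle_informative => HPQ;
  case: excluded_middle_informative => HP;
  case: excluded_middle_informative => HQ; rewrite ?mulr1 ?mulr0 ?mul0r // //; exfalso; tauto.
Qed.

Lemma usplit (T : Type) (PG PH : seq T -> Prop) n (w : seq T) :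
  (forall wa, PG wa -> size wa = n) ->
  ind (exists wa wb, w = wa ++ wb /\ PG wa /\ PH wb) =
  \sum_(0 <= m < (size w).+1) ind (PG (take m w)) * ind (PH (drop m w)) :> K.
Proof.
move=> HG; case: (leqP n (size w)) => Hn.
  rewrite (bigD1_seq n) ?iota_uniq ?mem_index_iota ?ltnS ?Hn //=.
  rewrite big1_seq ?addr0.
    rewrite -ind_and; apply: ind_iff; split.
      case=> wa [wb [-> [Ha Hb]]]; have Hs := HG _ Ha.
      by rewrite -Hs take_size_cat // drop_size_cat.
    by case=> Ha Hb; exists (take n w), (drop n w); rewrite cat_take_drop.
  move=> m /andP [Hmn]; rewrite mem_index_iota ltnS /= => Hm.
  rewrite (indF (P := PG _)) ?mul0r // => /HG; rewrite size_takel //.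
  by move/eqP; rewrite (negbTE Hmn).
rewrite big1_seq.
  apply: indF; case=> wa [wb [Hw [Ha _]]]; have := HG _ Ha.
  move/(f_equal size): Hw; rewrite size_cat => Hw Hs.
  by move: Hn; rewrite Hw Hs ltnNge leq_addr.
move=> m /andP [_]; rewrite mem_index_iota ltnS /= => Hm.
rewrite (indF (P := PG _)) ?mul0r // => /HG Hs.
by move: Hn; rewrite -Hs size_takel // ltnNge Hm.
Qed.

Section Shuffle.
Variables A1 A2 : Type.

Lemma sh_nil_r (u : seq A1) : shuffle u ([::] : seq A2) = [:: map inl u].
Proof. by case: u. Qed.

Lemma sh_cons (a : A1) u (b : A2) v :
  shuffle (a :: u) (b :: v) =
  map (cons (inl a)) (shuffle u (b :: v)) ++ map (cons (inr b)) (shuffle (a :: u) v).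
Proof. by []. Qed.

Lemma sum_sh (F : seq (A1 + A2) -> K) (w1 : seq A1) (w2 : seq A2) :
  \sum_(w <- shuffle w1 w2) F w =
    (if w1 is [::] then (if w2 is [::] then F [::] else 0) else 0)
  + (if w1 is a :: u then \sum_(w <- shuffle u w2) F (inl a :: w) else 0)
  + (if w2 is b :: v then \sum_(w <- shuffle w1 v) F (inr b :: w) else 0).
Proof.
case: w1 => [|a u]; case: w2 => [|b v].
- by rewrite /= big_seq1 !addr0.
- by rewrite /= !big_seq1 !add0r.
- by rewrite sh_nil_r sh_nil_r !big_seq1 /= add0r addr0.
- by rewrite sh_cons big_cat !big_map /= add0r.
Qed.

Variable H : seq (A1 + A2) -> K.

Definition Lsh (G : seq (A1 + A2) -> K) w1 w2 :=
  \sum_(w <- shuffle w1 w2) \sum_(0 <= m < (size w).+1) G (take m w) * H (drop m w).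
Definition Rsh (G : seq (A1 + A2) -> K) (w1 : seq A1) (w2 : seq A2) :=
  \sum_(0 <= i < (size w1).+1) \sum_(0 <= k < (size w2).+1)
    (\sum_(wa <- shuffle (take i w1) (take k w2)) G wa) *
    (\sum_(wb <- shuffle (drop i w1) (drop k w2)) H wb).

Lemma Lsh_step (G : seq (A1 + A2) -> K) (w1 : seq A1) (w2 : seq A2) : Lsh G w1 w2 =
  G [::] * \sum_(w <- shuffle w1 w2) H w
  + (if w1 is a :: u then Lsh (fun x => G (inl a :: x)) u w2 else 0)
  + (if w2 is b :: v then Lsh (fun x => G (inr b :: x)) w1 v else 0).
Proof.
rewrite /Lsh.
under eq_bigr do rewrite big_nat_recl //.
rewrite big_split /= mulr_sumr -addrA; congr (_ + _).
  by apply: eq_bigr => i _; rewrite take0 drop0.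
rewrite sum_sh; case: w1 => [|a u]; case: w2 => [|b v];
  rewrite /= ?big_geq ?add0r ?addr0 //.
Qed.

Let SH (w1 : seq A1) (w2 : seq A2) i k :=
  \sum_(wb <- shuffle (drop i w1) (drop k w2)) H wb.

Lemma sum_nat_tail0 (F : nat -> K) (T : Type) (w : seq T) :
  (forall i, (i < size w)%N -> F i.+1 = 0) ->
  \sum_(0 <= i < (size w).+1) F i = F 0%N.
Proof.
move=> HF; rewrite big_nat_recl // big1_seq ?addr0 // => i /andP [_].
by rewrite mem_index_iota /= => Hi; apply: HF.
Qed.

Lemma RD (G : seq (A1 + A2) -> K) (w1 : seq A1) (w2 : seq A2) :
  \sum_(0 <= i < (size w1).+1) \sum_(0 <= k < (size w2).+1)
     (match take i w1 with [::] => match take k w2 with [::] => G [::] | _ => 0 end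
                       | _ => 0 end) * SH w1 w2 i k
  = G [::] * \sum_(w <- shuffle w1 w2) H w.
Proof.
rewrite sum_nat_tail0; last first.
  move=> i; case: w1 => [|a u] //= _.
  by rewrite big1 // => k _; rewrite mul0r.
rewrite sum_nat_tail0; last first.
  by move=> k; rewrite take0; case: w2 => [|b v] //= _; rewrite mul0r.
by rewrite !take0 /SH !drop0.
Qed.

Lemma RA (G : seq (A1 + A2) -> K) (w1 : seq A1) (w2 : seq A2) :
  \sum_(0 <= i < (size w1).+1) \sum_(0 <= k < (size w2).+1)
     (match take i w1 with [::] => 0
        | a :: u => \sum_(w <- shuffle u (take k w2)) G (inl a :: w) end) * SH w1 w2 i k
  = (if w1 is a :: u then Rsh (fun x => G (inl a :: x)) u w2 else 0).
Proof.
case: w1 => [|a u] /=.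
  by rewrite big_nat1 ?take0 big1 // => k _; rewrite mul0r.
rewrite big_nat_recl // ?take0 big1 ?add0r //; last by move=> k _; rewrite mul0r.
Qed.

Lemma RB (G : seq (A1 + A2) -> K) (w1 : seq A1) (w2 : seq A2) :
  \sum_(0 <= i < (size w1).+1) \sum_(0 <= k < (size w2).+1)
     (match take k w2 with [::] => 0
        | b :: v => \sum_(w <- shuffle (take i w1) v) G (inr b :: w) end) * SH w1 w2 i k
  = (if w2 is b :: v then Rsh (fun x => G (inr b :: x)) w1 v else 0).
Proof.
case: w2 => [|b v] /=.
  by rewrite big1 // => i _; rewrite big_nat1 ?take0 mul0r.
by apply: eq_bigr => i _; rewrite big_nat_recl // ?take0 mul0r add0r.
Qed.

Lemma Rsh_step (G : seq (A1 + A2) -> K) (w1 : seq A1) (w2 : seq A2) : Rsh G w1 w2 =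
  G [::] * \sum_(w <- shuffle w1 w2) H w
  + (if w1 is a :: u then Rsh (fun x => G (inl a :: x)) u w2 else 0)
  + (if w2 is b :: v then Rsh (fun x => G (inr b :: x)) w1 v else 0).
Proof.
rewrite -RD -RA -RB -!big_split /Rsh; apply: eq_bigr => i _.
rewrite -!big_split; apply: eq_bigr => k _.
by rewrite sum_sh !mulrDl.
Qed.

Lemma ssl (G : seq (A1 + A2) -> K) (w1 : seq A1) (w2 : seq A2) : Lsh G w1 w2 = Rsh G w1 w2.
Proof.
elim: w1 w2 G => [|a u IHu] w2; elim: w2 => [|b v IHv] G;
  by rewrite Lsh_step Rsh_step ?IHu ?IHv.
Qed.

End Shuffle.

Lemma big1_L (T : Type) (s : seq T) (F : T -> K) : (forall x, F x = 0) -> \sum_(x <- s) F x = 0.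
Proof. by move=> HF; rewrite big1. Qed.

Lemma sum_sh_nil (A1 A2 : Type) (u1 : seq A1) (u2 : seq A2) :
  \sum_(w <- shuffle u1 u2) ind (w = [::]) = ind (u1 = [::]) * ind (u2 = [::]) :> K.
Proof.
have h0 : forall (T : Type) (x : T) s, ind (x :: s = [::]) = 0 :> K by move=> T x s; apply: indF.
have h1 : forall (T : Type), ind (([::] : seq T) = [::]) = 1 :> K by move=> T; apply: indT.
rewrite sum_sh; case: u1 => [|a r]; case: u2 => [|b v] /=;
  rewrite ?h0 ?h1 ?big1_L ?mulr1 ?mulr0 ?addr0 ?add0r //.
Qed.

Lemma sum_sh_inr (A1 A2 : Type) (Y : seq A2 -> Prop) (u1 : seq A1) (v : seq A2) :
  \sum_(w <- shuffle u1 v) ind (exists w2, w = map inr w2 /\ Y w2) =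
  (if u1 is [::] then ind (Y v) else 0) :> K.
Proof.
case: u1 => [|a r].
  rewrite big_seq1; apply: ind_iff; split; last by move=> H; exists v.
  by case=> w2 [/inj_map E HY]; rewrite (E (@inr_inj _ _)) .
elim: v Y => [|b v IH] Y; rewrite sum_sh /= add0r big1_L ?add0r //.
- by move=> w; apply: indF; case=> w2 [E _]; case: w2 E.
- rewrite -[RHS](IH (fun w2 => Y (b :: w2))); apply: eq_bigr => w _; apply: ind_iff.
  split; first by move=> [w2' [E HY]]; case: w2' E HY => [|c w2] //= E HY; exists w2; injection E => -> ->.
  by case=> w2 [-> HY]; exists (b :: w2).
- by move=> w; apply: indF; case=> w2 [E _]; case: w2 E.
Qed.

Lemma sum4 (X L : Type) (xs : seq X) (ls : seq L) (n1 n2 : nat)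
   (al be : X -> nat -> K) (ga de : L -> nat -> K) :
  \sum_(x <- xs) \sum_(l <- ls)
     (\sum_(0 <= i < n1) al x i * ga l i) * (\sum_(0 <= k < n2) be x k * de l k)
  = \sum_(0 <= i < n1) \sum_(0 <= k < n2)
     (\sum_(x <- xs) al x i * be x k) * (\sum_(l <- ls) ga l i * de l k).
Proof.
transitivity (\sum_(x <- xs) \sum_(l <- ls) \sum_(0 <= i < n1) \sum_(0 <= k < n2)
                (al x i * be x k) * (ga l i * de l k)).
  apply: eq_bigr => x _; apply: eq_bigr => l _; rewrite big_distrlr /=.
  apply: eq_bigr => i _; apply: eq_bigr => k _; by rewrite mulrACA.
transitivity (\sum_(0 <= i < n1) \sum_(0 <= k < n2) \sum_(x <- xs) \sum_(l <- ls)
                (al x i * be x k) * (ga l i * de l k)).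
  under eq_bigr => x _ do rewrite exchange_big.
  under eq_bigr => x _ do under eq_bigr => i _ do rewrite exchange_big.
  rewrite exchange_big; apply: eq_bigr => i _; by rewrite exchange_big.
apply: eq_bigr => i _; apply: eq_bigr => k _; by rewrite big_distrlr.
Qed.

End Alg.

Lemma AllP_all (S : Type) (P : term S -> Prop) ts : (forall t, P t) -> AllP P ts.
Proof. by move=> H; elim: ts => [|u us IH] //=. Qed.

Lemma CT_node_cons (S : Type) (A : alphabet S) (P : A -> Prop) s ts (c : A) w :
  CT P (Node s ts) (c :: w) <-> P c /\ aD s c /\ CTSg (@CT S A) c 1 ts w.
Proof. by split => [[a [w' [[<- <-] H]]] | H]; last by exists c, w. Qed.

Arguments shuffle : simpl never.
Arguments CT : simpl never.

Section Dsum.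
Variable K : fieldType.
Variable S : Type.
Variables A1 A2 : alphabet S.
Local Notation D := (dsum A1 A2).
Local Open Scope ring_scope.

Definition LowP (t : term S) := forall (P : D -> Prop), (forall a, ~ P (inl a)) ->
  forall w, CT P t w <-> exists w2, w = map inr w2 /\ CT (fun b => P (inr b)) t w2.

Lemma lows ts : AllP LowP ts -> forall (b : A2) j (w : seq D),
  CTSg (@CT S D) (inr b) j ts w <-> exists w2, w = map inr w2 /\ CTSg (@CT S A2) b j ts w2.
Proof.
elim: ts => [|u us IHs] /=.
  move=> _ b j w0; split; first by move->; exists [::].
  by case=> w2 [-> ->].
case=> IHu IHus b j w0; split.
  case=> w1 [w2 [-> [H1 H2]]].
  have [v1 [E1 H1']] := (IHu _ (fun a => id) w1).1 H1.
  have [v2 [E2 H2']] := (IHs IHus b j.+1 w2).1 H2.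
  exists (v1 ++ v2); rewrite E1 E2 map_cat; split=> //; exists v1, v2; split=> //.
case=> w2 [-> [v1 [v2 [-> [H1 H2]]]]]; exists (map inr v1), (map inr v2).
rewrite map_cat; split=> //; split.
  by apply/(IHu _ (fun a => id)); exists v1.
by apply/IHs => //; exists v2.
Qed.

Lemma low_all : forall t : term S, LowP t.
Proof.
elim/term_ind' => [|s ts IH] P HP w.
  by split; [move->; exists [::] | case=> w2 [-> ->]].
split.
  case=> a [w' [-> [Ha [HD Hts]]]]; case: a Ha HD Hts => [a|b] Ha HD Hts.
    by case: (HP a).
  have [w2 [-> H]] := (lows IH b 1 w').1 Hts.
  by exists (b :: w2); split=> //; apply/CT_node_cons.
case=> w2 [->]; case: w2 => [|b w2] /= H; first by case: H => a [w' [E _]].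
have [Hb [HD Hts]] := (CT_node_cons _ _ _ _ _).1 H.
apply/(CT_node_cons P s ts (inr b) (map inr w2)); split=> //; split=> //; apply/(lows IH); exists w2; split=> //.
Qed.

Lemma lows_all ts (b : A2) j (w : seq D) :
  CTSg (@CT S D) (inr b) j ts w <-> exists w2, w = map inr w2 /\ CTSg (@CT S A2) b j ts w2.
Proof. by apply: lows; apply: AllP_all; apply: low_all. Qed.

Definition Q (P1 : A1 -> Prop) : D -> Prop :=
  fun c => match c with inl x => P1 x | inr y => aR y end.

Definition LT (t : term S) (P1 : A1 -> Prop) (u1 : seq A1) (u2 : seq A2) : K :=
  \sum_(w <- shuffle u1 u2) ind (CT (Q P1) t w).
Definition RT (t : term S) (P1 : A1 -> Prop) (u1 : seq A1) (u2 : seq A2) : K :=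
  \sum_(x <- decomps t) ind (CT P1 x.1 u1) * ind (CF (@aR S A2) x.2 u2).
Definition LTS (a : A1) j ts (r : seq A1) (u2 : seq A2) : K :=
  \sum_(w <- shuffle r u2) ind (CTSg (@CT S D) (inl a) j ts w).
Definition RTS (a : A1) j ts (r : seq A1) (u2 : seq A2) : K :=
  \sum_(l <- prodseq (map (@decomps S) ts))
     ind (CTSg (@CT S A1) a j (map fst l) r) * ind (CF (@aR S A2) (flatten (map snd l)) u2).

Lemma CF_usplit (A : alphabet S) (P : A -> Prop) f1 f2 (w : seq A) :
  ind (CF P (f1 ++ f2) w) = \sum_(0 <= m < (size w).+1)
     ind (CF P f1 (take m w)) * ind (CF P f2 (drop m w)) :> K.
Proof.
rewrite (ind_iff K (CF_cat _ _ _ _)); apply: usplit => wa; exact: CF_size.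
Qed.

Lemma TI : forall t P1 u1 u2, LT t P1 u1 u2 = RT t P1 u1 u2.
Proof.
elim/term_ind' => [|s ts IH] P1 u1 u2.
  rewrite /LT sum_sh_nil /RT /= big_seq1; congr (_ * _); apply: ind_iff.
  by rewrite CF_single.
have LR : forall a j r u2, LTS a j ts r u2 = RTS a j ts r u2.
  elim: ts IH => [|c cs IHs] /=.
    by move=> _ a j r u3; rewrite /LTS /RTS /= big_seq1 sum_sh_nil.
  case=> IHc IHcs a j r u3.
  transitivity (@Lsh K _ _ (fun w => ind (CTSg (@CT S D) (inl a) j.+1 cs w))
                    (fun w => ind (CT (aE j (inl a : D)) c w)) r u3).
    apply: eq_bigr => w _; apply: usplit => wa; exact: CT_size.
  rewrite ssl /Rsh.
  transitivity (\sum_(0 <= i < (size r).+1) \sum_(0 <= k < (size u3).+1)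
     RT c (aE j a) (take i r) (take k u3) * RTS a j.+1 cs (drop i r) (drop k u3)).
    apply: eq_bigr => i _; apply: eq_bigr => k _.
    rewrite -(IHs IHcs) -IHc; congr (_ * _); apply: eq_bigr => w _.
  rewrite /RTS /= big_flatten /= big_map.
  transitivity (\sum_(x <- decomps c) \sum_(l <- prodseq [seq decomps i | i <- cs])
     (\sum_(0 <= i < (size r).+1) @ind K (CT (aE j a) x.1 (take i r)) *
          ind (CTSg (@CT S A1) a j.+1 (map fst l) (drop i r))) *
     (\sum_(0 <= k < (size u3).+1) ind (CF (@aR S A2) x.2 (take k u3)) *
          ind (CF (@aR S A2) (flatten (map snd l)) (drop k u3)))); last first.
    apply: eq_bigr => x _; rewrite big_map; apply: eq_bigr => l _ /=.
    rewrite -CF_usplit; congr (_ * _).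
    by apply: esym; apply: usplit => wa; exact: CT_size.
  by rewrite sum4.
have HL : LT (Node s ts) P1 u1 u2 =
   (if u1 is a :: r then ind (P1 a) * (ind (aD s a) * LTS a 1 ts r u2) else 0)
 + (if u1 is [::] then ind (CT (@aR S A2) (Node s ts) u2) else 0).
  rewrite /LT sum_sh.
  have E0 : ind (CT (Q P1) (Node s ts) [::]) = 0 :> K.
    by apply: indF; case=> a [w' [E _]].
  case: u1 => [|a r]; case: u2 => [|b v]; rewrite /= ?E0 ?add0r ?addr0.
  - by apply/esym; apply: indF; case=> a [w' [E _]].
  - rewrite (eq_bigr (fun w => ind (exists w2, w = map inr w2 /\
                  (aR b /\ aD s b /\ CTSg (@CT S A2) b 1 ts w2)))).
      by rewrite sum_sh_inr (ind_iff K (CT_node_cons _ _ _ _ _)).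
    move=> w _; apply: ind_iff; split.
      case=> c [w' [[<- <-] [Hb [HD H]]]].
      by have [w2 [E H2]] := (lows_all _ _ _ _).1 H; exists w2.
    case=> w2 [-> [Hb [HD H]]]; exists (inr b), (map inr w2); split=> //; split=> //.
    by split=> //; apply/(lows_all _ _ _ _); exists w2.
  - rewrite /LTS mulr_sumr mulr_sumr; apply: eq_bigr => w _.
    by rewrite (ind_iff K (CT_node_cons _ _ _ _ _)) !ind_and.
  - rewrite [X in _ + X](eq_bigr (fun w => ind (exists w2, w = map inr w2 /\
                  (aR b /\ aD s b /\ CTSg (@CT S A2) b 1 ts w2)))).
      rewrite sum_sh_inr /= addr0 /LTS mulr_sumr mulr_sumr; apply: eq_bigr => w _.
      by rewrite (ind_iff K (CT_node_cons _ _ _ _ _)) !ind_and.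
    move=> w _; apply: ind_iff; split.
      case=> c [w' [[<- <-] [Hb [HD H]]]].
      by have [w2 [E H2]] := (lows_all _ _ _ _).1 H; exists w2.
    case=> w2 [-> [Hb [HD H]]]; exists (inr b), (map inr w2); split=> //; split=> //.
    by split=> //; apply/(lows_all _ _ _ _); exists w2.
have HR : RT (Node s ts) P1 u1 u2 =
   (if u1 is a :: r then ind (P1 a) * (ind (aD s a) * RTS a 1 ts r u2) else 0)
 + (if u1 is [::] then ind (CT (@aR S A2) (Node s ts) u2) else 0).
  rewrite /RT /= big_cons big_map (ind_iff K (CF_single _ _ _)) addrC.
  clear HL; case: u1 => [|a r] /=.
    rewrite (indT K (erefl _)) mul1r big1 ?add0r // => l _.
    by rewrite indF ?mul0r //; case=> a [w' [E _]].
  rewrite (@indF K (_ :: _ = _)) // mul0r addr0 /RTS mulr_sumr mulr_sumr.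
  rewrite addr0; apply: eq_bigr => l _.
  by rewrite (ind_iff K (CT_node_cons _ _ _ _ _)) !ind_and !mulrA.
by rewrite HL HR; case: (u1) => [|a r] //; rewrite LR.
Qed.

Definition FR (f : forest S) (w1 : seq A1) (w2 : seq A2) : K :=
  \sum_(q <- DeltaE f) q.1.1 * (ind (CF (@aR S A1) q.1.2 w1) * ind (CF (@aR S A2) q.2 w2)).

Lemma FI : forall (f : forest S) w1 w2,
  \sum_(w <- shuffle w1 w2) ind (CF (@aR S D) f w) = FR f w1 w2.
Proof.
elim=> [|t f IH] w1 w2.
  by rewrite sum_sh_nil /FR big_seq1 mul1r.
transitivity (\sum_(0 <= i < (size w1).+1) \sum_(0 <= k < (size w2).+1)
     RT t (@aR S A1) (take i w1) (take k w2) * FR f (drop i w1) (drop k w2)).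
  transitivity (@Lsh K _ _ (fun w => ind (CF (@aR S D) f w))
                    (fun w => ind (CT (@aR S D) t w)) w1 w2).
    apply: eq_bigr => w _; apply: usplit => wa; exact: CT_size.
  rewrite ssl /Rsh; apply: eq_bigr => i _; apply: eq_bigr => k _.
  by rewrite -IH -TI.
rewrite /FR /= /mulNN big_allpairs_dep /= /DeltaT big_map.
transitivity (\sum_(x <- decomps t) \sum_(q <- DeltaE f)
     (\sum_(0 <= i < (size w1).+1) @ind K (CF (@aR S A1) (rd [:: x.1]) (take i w1)) *
          (q.1.1 * ind (CF (@aR S A1) q.1.2 (drop i w1)))) *
     (\sum_(0 <= k < (size w2).+1) ind (CF (@aR S A2) (rd x.2) (take k w2)) *
          ind (CF (@aR S A2) q.2 (drop k w2)))); last first.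
  apply: eq_bigr => x _; apply: eq_bigr => q _ /=.
  rewrite !CF_usplit mul1r mulrA; congr (_ * _).
  by rewrite mulr_sumr; apply: eq_bigr => i _; rewrite mulrCA.
rewrite sum4; apply: eq_bigr => i _; apply: eq_bigr => k _; congr (_ * _).
  apply: eq_bigr => x _; congr (_ * _); apply: ind_iff.
    exact: iff_sym (iff_trans (CF_rd _ _ _) (CF_single _ _ _)).
  exact: iff_sym (CF_rd _ _ _).
by apply: eq_bigr => q _; rewrite mulrA.
Qed.

End Dsum.

Section Pos.
Variable S : Type.
Local Notation Ap := (Apos S).

Fixpoint cwsg (cw : term S -> seq nat -> seq (S * seq nat)) (ts : seq (term S))
   (u : seq nat) (j : nat) : seq (S * seq nat) :=
  match ts with
  | [::] => [::]
  | c :: cs => cw c (u ++ [:: j]) ++ cwsg cw cs u j.+1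
  end.

Fixpoint cw (t : term S) (u : seq nat) {struct t} : seq (S * seq nat) :=
  match t with
  | Leaf => [::]
  | Node s ts => (s, u) :: cwsg cw ts u 1
  end.

Definition cwf (f : forest S) : seq (S * seq nat) := flatten (map (fun t => cw t [::]) f).

Lemma CT_cw_all : forall (t : term S) u (P : Ap -> Prop),
  (forall s, P (s, u)) -> CT P t (cw t u).
Proof.
elim/term_ind' => [|s ts IH] u P HP //.
apply/(CT_node_cons P s ts (s, u)); split=> //; split=> //.
suff H : forall j, CTSg (@CT S Ap) (s, u) j ts (cwsg cw ts u j) by apply: H.
elim: ts IH => [|c cs IHs] //= [IHc IHcs] j.
exists (cw c (u ++ [:: j])), (cwsg cw cs u j.+1); split=> //; split; last exact: IHs.
by apply: IHc => s'; exists 0%N.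
Qed.

Lemma CF_cwf f : CF (@aR S Ap) f (cwf f).
Proof.
elim: f => [|t f IH] //=; exists (cw t [::]), (cwf f); split=> //; split=> //.
by apply: CT_cw_all => s; exists 0%N.
Qed.

Definition nzl (b : S * seq nat) : bool := 0%N \notin b.2.

Lemma nseq_nz l : 0%N \notin nseq l 0%N -> l = 0%N.
Proof. by case: l => //= l; rewrite in_cons eqxx. Qed.

Lemma cw_unique : forall (t : term S) u (P : Ap -> Prop),
  (forall b, P b -> nzl b -> b.2 = u) ->
  forall w, CT P t w -> all nzl w -> w = cw t u.
Proof.
elim/term_ind' => [|s ts IH] u P HP w; first by move->.
case: w => [|a w']; first by case=> a [w' [E _]].
move/(CT_node_cons _ _ _ _ _) => [Pa [Da Hts]] /= /andP [nza nzw].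
have Ea : a = (s, u).
  by rewrite [a]surjective_pairing (Da : a.1 = s) (HP _ Pa nza).
rewrite Ea; congr (_ :: _); rewrite Ea in Hts.
suff H : forall j w', CTSg (@CT S Ap) (s, u) j ts w' -> all nzl w' -> w' = cwsg cw ts u j.
  exact: H.
elim: ts IH {Hts nzw w'} => [|c cs IHs] //= [IHc IHcs] j w'.
case=> w1 [w2 [-> [H1 H2]]]; rewrite all_cat => /andP [n1 n2].
congr (_ ++ _); last exact: IHs.
apply: IHc H1 n1 => b [l Hb] nzb.
by move: nzb; rewrite /nzl Hb; case: l {Hb} => [|l] //=; rewrite mem_cat in_cons /= in_cons eqxx !orbT.
Qed.

Lemma cwf_unique f w : CF (@aR S Ap) f w -> all nzl w -> w = cwf f.
Proof.
elim: f w => [|t f IH] w //=.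
case=> w1 [w2 [-> [H1 H2]]]; rewrite all_cat => /andP [n1 n2].
congr (_ ++ _); last exact: IH.
apply: cw_unique H1 n1 => b [l Hb] nzb.
by move: nzb; rewrite /nzl Hb => /nseq_nz ->.
Qed.

Lemma cw_nz : forall (t : term S) u, 0%N \notin u -> all nzl (cw t u).
Proof.
elim/term_ind' => [|s ts IH] u Hu //=; rewrite /nzl Hu /=.
suff H : forall j, (0 < j)%N -> all nzl (cwsg cw ts u j) by apply: H.
elim: ts IH => [|c cs IHs] //= [IHc IHcs] j Hj.
rewrite all_cat IHc ?IHs //.
by rewrite mem_cat negb_or Hu mem_seq1 eq_sym -lt0n Hj.
Qed.

Lemma cwf_nz f : all nzl (cwf f).
Proof. by elim: f => [|t f IH] //=; rewrite all_cat cw_nz. Qed.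

Variable ar : S -> nat.

Fixpoint AllL (T : Type) (P : T -> Prop) (s : seq T) : Prop :=
  if s is x :: s' then P x /\ AllL P s' else True.

Lemma AllL_cat (T : Type) (P : T -> Prop) s1 s2 : AllL P s1 -> AllL P s2 -> AllL P (s1 ++ s2).
Proof. by elim: s1 => [|x s1 IH] //= [H1 H2] H; split=> //; apply: IH. Qed.

Lemma cw_labels : forall (t : term S) u, AllL (fun b => exists z, b.2 = u ++ z) (cw t u).
Proof.
elim/term_ind' => [|s ts IH] u //=; split; first by exists [::]; rewrite cats0.
suff H : forall j, AllL (fun b => exists z, b.2 = u ++ z) (cwsg cw ts u j) by apply: H.
elim: ts IH => [|c cs IHs] //= [IHc IHcs] j.
apply: AllL_cat; last exact: IHs.
move: (IHc (u ++ [:: j])); elim: (cw c _) => [|b l IHl] //= [[z Hz] H]; split.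
  by exists (j :: z); rewrite Hz -catA.
exact: IHl.
Qed.

Lemma cwsg_labels ts u j : AllL (fun b => exists j' z, (j <= j')%N /\ b.2 = u ++ j' :: z) (cwsg cw ts u j).
Proof.
elim: ts j => [|c cs IHs] j //=.
apply: AllL_cat.
  move: (cw_labels c (u ++ [:: j])); elim: (cw c _) => [|b l IHl] //= [[z Hz] H]; split.
    by exists j, z; rewrite Hz -catA.
  exact: IHl.
move: (IHs j.+1); elim: (cwsg cw cs u j.+1) => [|b l IHl] //= [[j' [z [Hj Hz]]] H]; split.
  by exists j', z; split=> //; exact: ltnW.
exact: IHl.
Qed.

Definition NEv (v : seq nat) (r : seq (S * seq nat)) : Prop :=
  if r is b :: _ then ~ (exists z, b.2 = v ++ z) else True.
Definition NSE (v : seq nat) (r : seq (S * seq nat)) : Prop :=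
  if r is b :: _ then forall j z, b.2 <> v ++ j :: z else True.

Lemma cat_inj_l (T : eqType) (u z1 z2 : seq T) : u ++ z1 = u ++ z2 -> z1 = z2.
Proof. by elim: u => [|x u IH] //= [] /IH. Qed.

Definition TInj (t : term S) := wf_term ar t -> forall t' v r1 r2, wf_term ar t' ->
  cw t v ++ r1 = cw t' v ++ r2 -> NEv v r1 -> NEv v r2 -> t = t' /\ r1 = r2.

Lemma tsinj ts : AllP TInj ts -> all (wf_term ar) ts -> forall ts' u j r1 r2,
  all (wf_term ar) ts' -> size ts = size ts' ->
  cwsg cw ts u j ++ r1 = cwsg cw ts' u j ++ r2 -> NSE u r1 -> NSE u r2 ->
  ts = ts' /\ r1 = r2.
Proof.
elim: ts => [|c cs IHs] /=.
  by move=> _ _ [|c' cs'] u j r1 r2 //= _ _ ->.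
case=> IHc IHcs /andP [wc wcs] [|c' cs'] u j r1 r2 //= /andP [wc' wcs'] [Hsz].
rewrite -!catA => E N1 N2.
have NE : forall r cs0, NSE u r -> NEv (u ++ [:: j]) (cwsg cw cs0 u j.+1 ++ r).
  move=> r cs0 Nr; move: (cwsg_labels cs0 u j.+1).
  case: (cwsg cw cs0 u j.+1) => [|b l] /=.
    case: r Nr => [|b r] //= Nr _ [z Hz]; apply: (Nr j z); by rewrite Hz -catA.
  case=> [[j' [z [Hj Hz]]] _] [z' Hz']; move: Hz'; rewrite Hz -catA /=.
  move/cat_inj_l => [Ej _]; by move: Hj; rewrite Ej ltnn.
have [-> E2] := IHc wc c' (u ++ [:: j]) _ _ wc' E (NE _ _ N1) (NE _ _ N2).
by have [-> ->] := IHs IHcs wcs cs' u j.+1 r1 r2 wcs' Hsz E2 N1 N2.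
Qed.

Lemma tinj : forall t, TInj t.
Proof.
elim/term_ind' => [|s ts IH] wt [|s' ts'] v r1 r2 wt' //=.
- by move=> -> /=; case; exists [::]; rewrite cats0.
- by move=> <- _ /=; case; exists [::]; rewrite cats0.
case=> Es E N1 N2; subst s'.
move: wt wt' => /andP [/eqP s1 w1] /andP [/eqP s2 w2].
have NS : forall r, NEv v r -> NSE v r.
  by case=> [|b r] //= Hn j z Hb; apply: Hn; exists (j :: z).
have [-> ->] := tsinj IH w1 w2 (etrans s1 (esym s2)) E (NS _ N1) (NS _ N2).
done.
Qed.

Lemma cwf_NSE f : reduced f -> NSE [::] (cwf f).
Proof. by case: f => [|[|s ts] f] //= _ j z. Qed.

Lemma cwf_inj f g : reduced f -> all (wf_term ar) f -> reduced g -> all (wf_term ar) g ->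
  cwf f = cwf g -> f = g.
Proof.
elim: f g => [|t f IH] [|t' g] //=.
- by case: t' => //=.
- by case: t => //=.
case: t => [|s ts] //= rf /andP [/andP [/eqP s1 w1] wf].
case: t' => [|s' ts'] //= rg /andP [/andP [/eqP s2 w2] wg].
case=> Es E; subst s'.
have [-> E2] := tsinj (AllP_all _ tinj) w1 w2 (etrans s1 (esym s2)) E (cwf_NSE rf) (cwf_NSE rg).
by rewrite (IH g rf wf rg wg E2).
Qed.

End Pos.

Section Final.
Variable K : fieldType.
Local Open Scope ring_scope.

Definition eqfb (S : Type) (f h : forest S) : bool :=
  if excluded_middle_informative (h = f) then true else false.

Lemma Ncoef_split (S : Type) (g : forest S -> K) (x : Nvec K S) f :
  \sum_(p <- x) p.1 * g p.2 =
  Ncoef x f * g f + \sum_(p <- [seq p <- x | ~~ eqfb f p.2]) p.1 * g p.2.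
Proof.
elim: x => [|p x IH]; first by rewrite /Ncoef !big_nil mul0r add0r.
rewrite /Ncoef big_cons /= big_cons IH /Ncoef /eqfb.
case: excluded_middle_informative => E /=.
  rewrite (indT K E) mulr1 E mulrDl addrA //.
rewrite (indF K E) mulr0 add0r big_cons /=; rewrite addrCA //.
Qed.

Lemma Ncoef_filter (S : Type) (x : Nvec K S) f h :
  Ncoef [seq p <- x | ~~ eqfb f p.2] h = if excluded_middle_informative (h = f) then 0 else Ncoef x h.
Proof.
case: excluded_middle_informative => Ehf.
  rewrite /Ncoef big_filter big1 // => p; rewrite /eqfb.
  case: excluded_middle_informative => //= E _; rewrite (indF K) ?mulr0 // => E'.
  by apply: E; rewrite E' Ehf.
rewrite /Ncoef big_filter [RHS](bigID (fun p => eqfb f p.2)) /= [X in _ = X + _]big1 ?add0r //.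
move=> p; rewrite /eqfb; case: excluded_middle_informative => //= E _.
by rewrite (indF K) ?mulr0 // => E'; apply: Ehf; rewrite -E' E.
Qed.

Lemma Ncoef_ext (S : Type) (g : forest S -> K) (x y : Nvec K S) :
  (forall f, Ncoef x f = Ncoef y f) ->
  \sum_(p <- x) p.1 * g p.2 = \sum_(p <- y) p.1 * g p.2.
Proof.
move: {2}(size x + size y)%N (leqnn (size x + size y)) => n.
elim: n x y => [|n IH] x y Hn Hc.
  by case: x Hn Hc => [|? ?] //; case: y => [|? ?] //; rewrite !big_nil.
have step : forall f,
   (size [seq p <- x | ~~ eqfb f p.2] + size [seq p <- y | ~~ eqfb f p.2] <= n)%N ->
    \sum_(p <- x) p.1 * g p.2 = \sum_(p <- y) p.1 * g p.2.
  move=> f Hs; rewrite (Ncoef_split g x f) (Ncoef_split g y f) Hc; congr (_ + _).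
  apply: IH Hs _ => h; rewrite !Ncoef_filter; destruct (excluded_middle_informative (h = f)); [done | apply: Hc].
have fil : forall (z : Nvec K S) (q : K * forest S),
    (size [seq p <- q :: z | ~~ eqfb q.2 p.2] <= size z)%N.
  move=> z q; rewrite /= {1}/eqfb; case: excluded_middle_informative => //= _.
  by rewrite size_filter count_size.
have fil2 : forall (z : Nvec K S) f, (size [seq p <- z | ~~ eqfb f p.2] <= size z)%N.
  by move=> z f; rewrite size_filter count_size.
case: x Hn Hc step => [|p x'] Hn Hc step.
  case: y Hn Hc step => [|q y'] Hn Hc step; first by rewrite !big_nil.
  by apply: (step q.2); rewrite /= add0n; apply: leq_trans (fil y' q) _; rewrite -ltnS.
apply: (step p.2); apply: leq_trans (leq_add (fil x' p) (fil2 y p.2)) _.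
by move: Hn; rewrite /= addSn ltnS.
Qed.

Lemma rE_CF (S : Type) (A : alphabet S) (f : forest S) (w : seq A) :
  rE A f w = ind (CF (@aR S A) f w) :> K.
Proof. by apply: ind_iff; apply: compat_CF. Qed.

Lemma Ncoef_rA (S : Type) (ar : S -> nat) (x : Nvec K S) f :
  validN ar x -> reduced f -> all (wf_term ar) f ->
  rA (Apos S) x (cwf f) = Ncoef x f.
Proof.
move=> Vx rf wf; elim: x Vx => [|p x IH]; first by rewrite /rA /Ncoef !big_nil.
rewrite /validN /= => /andP [/andP [rp wp] Vx].
rewrite /rA /Ncoef !big_cons; congr (_ + _); last exact: IH.
congr (_ * _); rewrite rE_CF; apply: ind_iff; split.
  move=> Hc; have E := cwf_unique Hc (cwf_nz f).
  exact: (cwf_inj rp wp rf wf (esym E)).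
by move=> ->; apply: CF_cwf.
Qed.

Lemma Ncoef_invalid (S : Type) (ar : S -> nat) (x : Nvec K S) f :
  validN ar x -> ~~ (reduced f && all (wf_term ar) f) -> Ncoef x f = 0.
Proof.
move=> Vx Nf; elim: x Vx => [|p x IH]; first by rewrite /Ncoef big_nil.
rewrite /validN /= => /andP [/andP [rp wp] Vx].
rewrite /Ncoef big_cons -/(Ncoef x f) IH // addr0 (indF K) ?mulr0 //.
by move=> E; move: Nf; rewrite -E rp wp.
Qed.

End Final.

Theorem theorem4p8 (K : fieldType) (charK0 : [pchar K] =i pred0)
    (S : Type) (ar : S -> nat) :
  (forall A1 A2 A3 : alphabet S,
     @alph_iso S (dsum (dsum A1 A2) A3) (dsum A1 (dsum A2 A3))
              (@sum_assocr A1 A2 A3))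
  /\
  (forall A : alphabet S,
     (forall x : Nvec K S, validN ar x -> bounded (rA A x)) /\
         (forall x y : Nvec K S, validN ar x -> validN ar y ->
            (forall f, Ncoef x f = Ncoef y f) -> rA A x =1 rA A y) /\
         (forall x y : Nvec K S, validN ar x -> validN ar y ->
            rA A (addN x y) =1 (fun w => rA A x w + rA A y w)) /\
         (forall (c : K) (x : Nvec K S), validN ar x ->
            rA A (scaleN c x) =1 (fun w => c * rA A x w)) /\
         rA A (@oneN K S) =1 oneP /\
         (forall x y : Nvec K S, validN ar x -> validN ar y ->
            rA A (mulN x y) =1 mulP (rA A x) (rA A y)) /\
         (forall (n : nat) (x : Nvec K S), validN ar x ->
            all (fun p => fdeg p.2 == n) x ->
            forall w : seq A, size w != n -> rA A x w = 0))
  /\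
  (forall (A1 A2 : alphabet S) (x : Nvec K S), validN ar x ->
     forall (w1 : seq A1) (w2 : seq A2),
       theta (rA (dsum A1 A2) x) w1 w2 = rtens A1 A2 (Delta x) w1 w2)
  /\
  (forall x y : Nvec K S, validN ar x -> validN ar y ->
     rA (Apos S) x =1 rA (Apos S) y ->
     forall f, Ncoef x f = Ncoef y f).
Proof.
split; [|split; [|split]].
- move=> A1 A2 A3; split.
  + exists (fun y : A1 + (A2 + A3) => match y with inl a => inl (inl a)
              | inr (inl b) => inl (inr b) | inr (inr c) => inr c end).
      by case=> [[a|b]|c].
    by case=> [a|[b|c]].
  + by case=> [[a|b]|c]; split.
  + by move=> s; case=> [[a|b]|c]; split.
  + by move=> j; case=> [[a|b]|c]; case=> [[a'|b']|c']; split.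
- move=> A; split; [|split; [|split; [|split; [|split; [|split]]]]].
  + move=> x _; exists (sumn (map (fun p => fdeg p.2) x)) => w.
    elim: x => [|p x IH] /= Hw; first by rewrite /rA big_nil.
    rewrite /rA big_cons -/(rA A x w) IH; last first.
      by apply: leq_ltn_trans Hw; rewrite leq_addl.
    rewrite rE_CF (indF K) ?mulr0 ?addr0 // => /CF_size E.
    by move: Hw; rewrite E ltnNge leq_addr.
  + by move=> x y _ _ Hc w; apply: (Ncoef_ext (fun f => rE A f w)).
  + by move=> x y _ _ w; rewrite /rA /addN big_cat.
  + move=> c x _ w; rewrite /rA /scaleN big_map mulr_sumr.
    by apply: eq_bigr => p _; rewrite mulrA.
  + move=> w; rewrite /rA /oneN big_seq1 /= mul1r rE_CF.
    case: w => [|a w] /=; first exact: indT.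
    by apply: indF.
  + move=> x y _ _ w; rewrite /rA /mulN /mulP big_allpairs_dep /=.
    transitivity (\sum_(p <- x) \sum_(q <- y) \sum_(0 <= i < (size w).+1)
       (p.1 * rE A p.2 (take i w)) * (q.1 * rE A q.2 (drop i w))).
      apply: eq_bigr => p _; apply: eq_bigr => q _.
      rewrite rE_CF CF_usplit mulr_sumr; apply: eq_bigr => i _.
      by rewrite !rE_CF mulrACA.
    apply: etrans; first (apply: eq_bigr => p _; exact: exchange_big).
    rewrite /= exchange_big big_mkord; apply: eq_bigr => i _; by rewrite big_distrlr.
  + move=> n x _ Hall w Hw; elim: x Hall => [|p x IH] /=; first by rewrite /rA big_nil.
    move=> /andP [/eqP Hp Hx]; rewrite /rA big_cons -/(rA A x w) IH // addr0.
    rewrite rE_CF (indF K) ?mulr0 // => /CF_size E.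
    by move: Hw; rewrite E Hp eqxx.
- move=> A1 A2 x _ w1 w2.
  rewrite /theta /rA exchange_big /rtens /Delta big_flatten /= big_map.
  apply: eq_bigr => p _; rewrite -mulr_sumr big_map.
  rewrite (eq_bigr (fun w => ind (CF (@aR S (dsum A1 A2)) p.2 w))); last first.
    by move=> w _; rewrite rE_CF.
  rewrite FI /FR mulr_sumr; apply: eq_bigr => q _.
  by rewrite /= !rE_CF mulrA.
- move=> x y Vx Vy H f.
  case Vf: (reduced f && all (wf_term ar) f).
    move/andP: Vf => [rf wf].
    by rewrite -(Ncoef_rA Vx rf wf) -(Ncoef_rA Vy rf wf); apply: H.
  by rewrite (Ncoef_invalid Vx) ?(Ncoef_invalid Vy) ?Vf.
Qed.
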